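(* Let $G_1=(V_1,E_1)$ and $G_2=(V_2,E_2)$ be connected graphs whose path metrics are conditionally strictly negative definite, and let $o\in V_2$. Then the path metric of the comb product $G_1\triangleright_o G_2$ is conditionally strictly negative definite.
   Context: The comb product $G_1\triangleright_o G_2$ is the graph obtained from $G_1$ by attaching to each vertex $v\in V_1$ its own copy of $G_2$, identifying the vertex $o$ of that copy with $v$ (copies attached at different vertices are disjoint otherwise). The path metric of a connected graph is the shortest-path distance on its vertex set. A symmetric real function $K$ on $V\times V$ is conditionally strictly negative definite if for every finitely supported $\lambda\colon V\to\mathbb{C}$, $\lambda\neq0$, with $\sum_v\lambda(v)=0$ one has $\sum_{x,y}\lambda(x)\overline{\lambda(y)}K(x,y)<0$. *)

(* Defs.v *)
From Stdlib Require Import Reals List ClassicalEpsilon.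
From Coquelicot Require Import Coquelicot.
Import ListNotations.
Open Scope R_scope.

Definition simple_graph {V : Type} (adj : V -> V -> Prop) : Prop :=
  (forall x y, adj x y -> adj y x) /\ (forall x, ~ adj x x).

Inductive walk {V : Type} (adj : V -> V -> Prop) : nat -> V -> V -> Prop :=
| walk_nil : forall x, walk adj 0 x x
| walk_cons : forall n x y z, walk adj n x y -> adj y z -> walk adj (S n) x z.

Definition connected {V : Type} (adj : V -> V -> Prop) : Prop :=
  forall x y : V, exists n, walk adj n x y.

(* Path metric: the length of a shortest walk (well defined for connected
   graphs; chosen classically). *)
Definition gdist {V : Type} (adj : V -> V -> Prop) (x y : V) : nat :=
  epsilon (inhabits 0%nat)
    (fun n => walk adj n x y /\ forall m, walk adj m x y -> (n <= m)%nat).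

Definition csum {A : Type} (f : A -> C) (s : list A) : C :=
  fold_right (fun a acc => Cplus (f a) acc) (RtoC 0) s.

Definition cond_strict_neg_def {V : Type} (K : V -> V -> R) : Prop :=
  forall (lam : V -> C) (s : list V),
    NoDup s ->
    (forall v, ~ In v s -> lam v = RtoC 0) ->
    (exists v, lam v <> RtoC 0) ->
    csum lam s = RtoC 0 ->
    let q := csum (fun x => csum (fun y =>
               Cmult (Cmult (lam x) (Cconj (lam y))) (RtoC (K x y))) s) s in
    Im q = 0 /\ Re q < 0.

Definition path_metric {V : Type} (adj : V -> V -> Prop) (x y : V) : R :=
  INR (gdist adj x y).

(* Comb product G1 |>_o G2: vertex (v, w) is the vertex w of the copy of G2
   attached at v; the vertex (v, o) is identified with v in V1. *)
Definition comb_adj {V1 V2 : Type} (adj1 : V1 -> V1 -> Prop)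
  (adj2 : V2 -> V2 -> Prop) (o : V2) (a b : V1 * V2) : Prop :=
  (fst a = fst b /\ adj2 (snd a) (snd b)) \/
  (snd a = o /\ snd b = o /\ adj1 (fst a) (fst b)).

(* Main.v *)
Require Import Defs.
From Stdlib Require Import Reals List ClassicalEpsilon Permutation Lra Lia Classical FunctionalExtensionality.
From Coquelicot Require Import Coquelicot.
Import ListNotations.
Open Scope R_scope.

Lemma C_ring_th : ring_theory (RtoC 0) (RtoC 1) Cplus Cmult Cminus Copp (@eq C).
Proof.
  constructor; intros;
  repeat match goal with x : C |- _ => destruct x end;
  unfold Cminus, Cplus, Cmult, Copp, RtoC; simpl;
  f_equal; ring.
Qed.
Add Ring Cring : C_ring_th.

Lemma csum_nil {A} (f : A -> C) : csum f [] = RtoC 0.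
Proof. reflexivity. Qed.
Lemma csum_cons {A} (f : A -> C) a l : csum f (a :: l) = Cplus (f a) (csum f l).
Proof. reflexivity. Qed.
Lemma csum_app {A} (f : A -> C) l1 l2 : csum f (l1 ++ l2) = Cplus (csum f l1) (csum f l2).
Proof. induction l1; simpl. ring. rewrite IHl1. ring. Qed.
Lemma csum_ext {A} (f g : A -> C) l : (forall x, In x l -> f x = g x) -> csum f l = csum g l.
Proof. induction l; simpl; intros H. reflexivity. rewrite H, IHl; auto. Qed.
Lemma csum_plus {A} (f g : A -> C) l : csum (fun x => Cplus (f x) (g x)) l = Cplus (csum f l) (csum g l).
Proof. induction l; simpl. ring. rewrite IHl. ring. Qed.
Lemma csum_minus {A} (f g : A -> C) l : csum (fun x => Cminus (f x) (g x)) l = Cminus (csum f l) (csum g l).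
Proof. induction l; simpl. ring. rewrite IHl. ring. Qed.
Lemma csum_mult_l {A} c (f : A -> C) l : csum (fun x => Cmult c (f x)) l = Cmult c (csum f l).
Proof. induction l; simpl. ring. rewrite IHl. ring. Qed.
Lemma csum_mult_r {A} c (f : A -> C) l : csum (fun x => Cmult (f x) c) l = Cmult (csum f l) c.
Proof. induction l; simpl. ring. rewrite IHl. ring. Qed.
Lemma csum_zero {A} (l : list A) : csum (fun _ => RtoC 0) l = RtoC 0.
Proof. induction l; simpl. ring. rewrite IHl. ring. Qed.
Lemma csum_map {A B} (f : B -> C) (g : A -> B) l : csum f (map g l) = csum (fun x => f (g x)) l.
Proof. induction l; simpl; congruence. Qed.
Lemma csum_swap {A B} (F : A -> B -> C) l1 l2 :
  csum (fun x => csum (fun y => F x y) l2) l1 = csum (fun y => csum (fun x => F x y) l1) l2.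
Proof.
  induction l1; simpl. rewrite csum_zero. reflexivity.
  rewrite IHl1, <- csum_plus. reflexivity.
Qed.
Lemma csum_conj {A} (f : A -> C) l : Cconj (csum f l) = csum (fun x => Cconj (f x)) l.
Proof. induction l; simpl. unfold Cconj, RtoC; simpl; f_equal; ring.
  rewrite Cplus_conj, IHl. reflexivity. Qed.
Lemma csum_perm {A} (f : A -> C) l l' : Permutation l l' -> csum f l = csum f l'.
Proof. induction 1; simpl; try congruence. ring. Qed.

Definition dec {T} (x y : T) := excluded_middle_informative (x = y).

Lemma csum_delta {A} (f : A -> C) l x : NoDup l -> In x l ->
  csum (fun y => if dec x y then f y else RtoC 0) l = f x.
Proof.
  induction 1 as [|a l Ha Hl IH]; simpl. tauto.
  intros [E|Hin].
  - subst a. destruct (dec x x); [|congruence].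
    rewrite (csum_ext _ (fun _ => RtoC 0)). rewrite csum_zero. ring.
    intros y Hy. destruct (dec x y); subst; tauto.
  - destruct (dec x a). subst; tauto. rewrite IH; auto. ring.
Qed.

Lemma csum_filter_nz {A} (f : A -> C) l :
  csum f l = csum f (filter (fun x => if excluded_middle_informative (f x = RtoC 0) then false else true) l).
Proof.
  induction l; simpl. reflexivity.
  destruct (excluded_middle_informative (f a = RtoC 0)); simpl; rewrite IHl; try rewrite e; ring.
Qed.

Lemma NoDup_filter' {A} (p : A -> bool) l : NoDup l -> NoDup (filter p l).
Proof.
  induction 1; simpl. constructor. destruct (p x); auto. constructor; auto.
  rewrite filter_In. tauto.
Qed.

Lemma csum_support {A} (f : A -> C) l l' : NoDup l -> NoDup l' ->
  (forall x, f x <> RtoC 0 -> (In x l <-> In x l')) -> csum f l = csum f l'.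
Proof.
  intros H1 H2 H. rewrite (csum_filter_nz f l), (csum_filter_nz f l').
  apply csum_perm, NoDup_Permutation; try apply NoDup_filter'; auto.
  intros x. rewrite !filter_In.
  destruct (excluded_middle_informative (f x = RtoC 0)) as [e|n].
  - split; intros [_ E]; discriminate.
  - specialize (H x n). tauto.
Qed.

Lemma NoDup_prod {A B} (l1 : list A) (l2 : list B) : NoDup l1 -> NoDup l2 -> NoDup (list_prod l1 l2).
Proof.
  induction 1; simpl; intros. constructor.
  apply NoDup_app; auto.
  - clear -H1. induction H1; simpl; constructor; auto.
    intros Hm. apply in_map_iff in Hm. destruct Hm as [y [E Hy]]. inversion E; subst; tauto.
  - intros [u w] Hm Hp. apply in_map_iff in Hm. destruct Hm as [y [E _]]. inversion E; subst.
    apply in_prod_iff in Hp. tauto.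
Qed.

Lemma csum_prod {A B} (F : A * B -> C) l1 l2 :
  csum F (list_prod l1 l2) = csum (fun v => csum (fun w => F (v, w)) l2) l1.
Proof. induction l1; simpl. reflexivity. rewrite csum_app, csum_map, IHl1. reflexivity. Qed.

Lemma Re_plus (a b : C) : Re (Cplus a b) = Re a + Re b. Proof. reflexivity. Qed.
Lemma Im_plus (a b : C) : Im (Cplus a b) = Im a + Im b. Proof. reflexivity. Qed.
Lemma csum_Im0 {A} (f : A -> C) l : (forall x, In x l -> Im (f x) = 0) -> Im (csum f l) = 0.
Proof. induction l; intros H. reflexivity. rewrite csum_cons, Im_plus, H, IHl; [ring| |]; simpl in *; auto. Qed.
Lemma csum_Rele {A} (f : A -> C) l : (forall x, In x l -> Re (f x) <= 0) -> Re (csum f l) <= 0.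
Proof. induction l; intros H. simpl; lra. rewrite csum_cons, Re_plus.
  specialize (H a (or_introl eq_refl)) as Ha. assert (Re (csum f l) <= 0) by (apply IHl; simpl in *; auto). lra. Qed.
Lemma csum_Relt {A} (f : A -> C) l x0 : (forall x, In x l -> Re (f x) <= 0) -> In x0 l -> Re (f x0) < 0 -> Re (csum f l) < 0.
Proof. induction l; intros H Hin Hlt. destruct Hin. rewrite csum_cons, Re_plus.
  specialize (H a (or_introl eq_refl)) as Ha.
  destruct Hin as [<-|Hin].
  - assert (Re (csum f l) <= 0) by (apply csum_Rele; simpl in *; auto). lra.
  - assert (Re (csum f l) < 0) by (apply IHl; simpl in *; auto). lra. Qed.

Lemma Cconj_R r : Cconj (RtoC r) = RtoC r.
Proof. unfold Cconj, RtoC; simpl; f_equal; ring. Qed.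

Definition Qf {A} (lam : A -> C) (K : A -> A -> R) (l : list A) : C :=
  csum (fun x => csum (fun y => Cmult (Cmult (lam x) (Cconj (lam y))) (RtoC (K x y))) l) l.

Lemma Qf_support {A} (lam : A -> C) K l l' : NoDup l -> NoDup l' ->
  (forall x, lam x <> RtoC 0 -> (In x l <-> In x l')) -> Qf lam K l = Qf lam K l'.
Proof.
  intros H1 H2 H. unfold Qf.
  transitivity (csum (fun x => csum (fun y => Cmult (Cmult (lam x) (Cconj (lam y))) (RtoC (K x y))) l') l).
  - apply csum_ext; intros x _. apply csum_support; auto.
    intros y Hy. apply H. intros E. apply Hy. rewrite E, Cconj_R. ring.
  - apply csum_support; auto. intros x Hx. apply H. intros E. apply Hx.
    rewrite (csum_ext _ (fun _ => RtoC 0)). apply csum_zero. intros y _. rewrite E. ring.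
Qed.

Definition S4 {A B} (F : A -> B -> A -> B -> C) l1 l2 :=
  csum (fun v => csum (fun w => csum (fun v' => csum (fun w' => F v w v' w') l2) l1) l2) l1.

Lemma S4_plus {A B} (F G : A -> B -> A -> B -> C) l1 l2 :
  S4 (fun a b c d => Cplus (F a b c d) (G a b c d)) l1 l2 = Cplus (S4 F l1 l2) (S4 G l1 l2).
Proof.
  unfold S4. rewrite <- csum_plus. apply csum_ext; intros.
  rewrite <- csum_plus. apply csum_ext; intros.
  rewrite <- csum_plus. apply csum_ext; intros.
  apply csum_plus.
Qed.

Lemma S4_ext {A B} (F G : A -> B -> A -> B -> C) l1 l2 :
  (forall a b c d, F a b c d = G a b c d) -> S4 F l1 l2 = S4 G l1 l2.
Proof.
  intros H. unfold S4. apply csum_ext; intros. apply csum_ext; intros.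
  apply csum_ext; intros. apply csum_ext; intros. apply H.
Qed.

Definition combK {V1 V2} (K1 : V1 -> V1 -> R) (K2 : V2 -> V2 -> R) (o : V2) (a b : V1 * V2) : R :=
  if dec (fst a) (fst b) then K2 (snd a) (snd b) else K2 (snd a) o + K1 (fst a) (fst b) + K2 o (snd b).

Definition delta {T} (x y : T) : C := if dec x y then RtoC 1 else RtoC 0.

Lemma csum_delta' {A} (f : A -> C) l x : NoDup l -> In x l ->
  csum (fun y => Cmult (delta x y) (f y)) l = f x.
Proof.
  intros. rewrite <- (csum_delta f l x) by auto. apply csum_ext; intros y _.
  unfold delta; destruct (dec x y); ring.
Qed.

Lemma csum_opp {A} (f : A -> C) l : csum (fun x => Copp (f x)) l = Copp (csum f l).
Proof. induction l; simpl. unfold Copp, RtoC; simpl; f_equal; ring. rewrite IHl. ring. Qed.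

Lemma identity {V1 V2} (K1 : V1 -> V1 -> R) (K2 : V2 -> V2 -> R) (o : V2) (L : V1 -> V2 -> C) s1 s2 :
  (forall v, K1 v v = 0) -> K2 o o = 0 -> NoDup s1 -> NoDup s2 -> In o s2 ->
  csum (fun v => csum (fun w => L v w) s2) s1 = RtoC 0 ->
  let m v := csum (fun w => L v w) s2 in
  let mu v w := Cminus (L v w) (Cmult (m v) (delta o w)) in
  S4 (fun v w v' w' => Cmult (Cmult (L v w) (Cconj (L v' w'))) (RtoC (combK K1 K2 o (v, w) (v', w')))) s1 s2
  = Cplus (Qf m K1 s1) (csum (fun v => Qf (mu v) K2 s2) s1).
Proof.
  intros HK1 HK2 N1 N2 Ho Hsum m mu.
  set (D := fun w w' => K2 w w' - K2 w o - K2 o w').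
  rewrite (S4_ext _ (fun v w v' w' =>
     Cplus (Cplus (Cplus
       (if dec v v' then Cmult (Cmult (L v w) (Cconj (L v' w'))) (RtoC (D w w')) else RtoC 0)
       (Cmult (Cmult (L v w) (RtoC (K2 w o))) (Cconj (L v' w'))))
       (Cmult (Cmult (L v w) (Cconj (L v' w'))) (RtoC (K1 v v'))))
       (Cmult (L v w) (Cmult (Cconj (L v' w')) (RtoC (K2 o w')))))).
  2:{ intros v w v' w'. unfold combK, D; simpl. destruct (dec v v').
      - subst v'. rewrite HK1. rewrite !RtoC_minus. ring.
      - rewrite !RtoC_plus. ring. }
  rewrite !S4_plus.
  assert (T2 : S4 (fun v w v' w' => Cmult (Cmult (L v w) (RtoC (K2 w o))) (Cconj (L v' w'))) s1 s2 = RtoC 0).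
  { unfold S4. rewrite (csum_ext _ (fun _ => RtoC 0)). apply csum_zero. intros v _.
    rewrite (csum_ext _ (fun _ => RtoC 0)). apply csum_zero. intros w _.
    rewrite (csum_ext _ (fun v' => Cmult (Cmult (L v w) (RtoC (K2 w o))) (csum (fun w' => Cconj (L v' w')) s2))).
    2:{ intros; apply csum_mult_l. }
    rewrite csum_mult_l.
    rewrite (csum_ext _ (fun v' => Cconj (csum (fun w' => L v' w') s2))).
    2:{ intros; rewrite csum_conj; reflexivity. }
    rewrite <- csum_conj, Hsum, Cconj_R. ring. }
  assert (T4 : S4 (fun v w v' w' => Cmult (L v w) (Cmult (Cconj (L v' w')) (RtoC (K2 o w')))) s1 s2 = RtoC 0).
  { unfold S4.
    set (X := csum (fun v' => csum (fun w' => Cmult (Cconj (L v' w')) (RtoC (K2 o w'))) s2) s1).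
    rewrite (csum_ext _ (fun v => Cmult (csum (fun w => L v w) s2) X)).
    - rewrite csum_mult_r, Hsum. ring.
    - intros v _. rewrite <- csum_mult_r. apply csum_ext; intros w _.
      unfold X. rewrite <- csum_mult_l. apply csum_ext; intros v' _. apply csum_mult_l. }
  rewrite T2, T4.
  assert (T3 : S4 (fun v w v' w' => Cmult (Cmult (L v w) (Cconj (L v' w'))) (RtoC (K1 v v'))) s1 s2 = Qf m K1 s1).
  { unfold S4, Qf. apply csum_ext; intros v _. rewrite csum_swap. apply csum_ext; intros v' _.
    unfold m. rewrite <- csum_mult_r, <- csum_mult_r. apply csum_ext; intros w _.
    rewrite csum_conj, <- csum_mult_l, <- csum_mult_r. apply csum_ext; intros w' _. ring. }
  rewrite T3.
  assert (T1 : S4 (fun v w v' w' => if dec v v' then Cmult (Cmult (L v w) (Cconj (L v' w'))) (RtoC (D w w')) else RtoC 0) s1 s2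
     = csum (fun v => Qf (mu v) K2 s2) s1).
  { unfold S4. apply csum_ext; intros v Hv.
    rewrite (csum_ext _ (fun w => csum (fun w' => Cmult (Cmult (L v w) (Cconj (L v w'))) (RtoC (D w w'))) s2)).
    2:{ intros w _. rewrite <- (csum_delta (fun v' => csum (fun w' => Cmult (Cmult (L v w) (Cconj (L v' w'))) (RtoC (D w w'))) s2) s1 v) by auto.
        apply csum_ext; intros v' _. destruct (dec v v'). reflexivity. apply csum_zero. }
    set (cm := Cconj (m v)).
    set (X := csum (fun w => csum (fun w' => Cmult (Cmult (L v w) (Cconj (L v w'))) (RtoC (K2 w w'))) s2) s2).
    set (Y := csum (fun w => Cmult (Cmult (L v w) cm) (RtoC (K2 w o))) s2).
    set (Z := Cmult (m v) (csum (fun w' => Cmult (Cconj (L v w')) (RtoC (K2 o w'))) s2)).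
    assert (Hcm : csum (fun w' => Cconj (L v w')) s2 = cm).
    { unfold cm, m. rewrite csum_conj. reflexivity. }
    transitivity (Cplus (Cplus X (Copp Y)) (Copp Z)).
    - rewrite (csum_ext _ (fun w => Cplus (Cplus
          (csum (fun w' => Cmult (Cmult (L v w) (Cconj (L v w'))) (RtoC (K2 w w'))) s2)
          (Copp (Cmult (Cmult (L v w) (RtoC (K2 w o))) (csum (fun w' => Cconj (L v w')) s2))))
          (Copp (Cmult (L v w) (csum (fun w' => Cmult (Cconj (L v w')) (RtoC (K2 o w'))) s2))))).
      + rewrite !csum_plus, !csum_opp. fold X. f_equal; [f_equal; f_equal|f_equal].
        * unfold Y. apply csum_ext; intros. rewrite Hcm. ring.
        * unfold Z, m. rewrite csum_mult_r. reflexivity.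
      + intros w _. rewrite (csum_ext _ (fun w' => Cplus (Cplus
           (Cmult (Cmult (L v w) (Cconj (L v w'))) (RtoC (K2 w w')))
           (Copp (Cmult (Cmult (L v w) (RtoC (K2 w o))) (Cconj (L v w')))))
           (Copp (Cmult (L v w) (Cmult (Cconj (L v w')) (RtoC (K2 o w'))))))).
        * rewrite !csum_plus, !csum_opp, !csum_mult_l. reflexivity.
        * intros w' _. unfold D. rewrite !RtoC_minus. ring.
    - symmetry. unfold Qf, mu. cbv beta.
      rewrite (csum_ext _ (fun w => Cplus (Cplus (Cplus
        (csum (fun w' => Cmult (Cmult (L v w) (Cconj (L v w'))) (RtoC (K2 w w'))) s2)
        (Copp (csum (fun w' => Cmult (delta o w') (Cmult (Cmult (L v w) cm) (RtoC (K2 w w')))) s2)))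
        (Copp (Cmult (delta o w) (Cmult (m v) (csum (fun w' => Cmult (Cconj (L v w')) (RtoC (K2 w w'))) s2)))))
        (Cmult (delta o w) (csum (fun w' => Cmult (delta o w') (Cmult (Cmult (m v) cm) (RtoC (K2 w w')))) s2)))).
      + rewrite !csum_plus, !csum_opp. fold X.
        rewrite (csum_ext (fun w => csum (fun w' => Cmult (delta o w') _) s2) (fun w => Cmult (Cmult (L v w) cm) (RtoC (K2 w o)))).
        2:{ intros w _. apply (csum_delta' (fun w' => Cmult (Cmult (L v w) cm) (RtoC (K2 w w')))); auto. }
        fold Y.
        rewrite (csum_delta' (fun w => Cmult (m v) (csum (fun w' => Cmult (Cconj (L v w')) (RtoC (K2 w w'))) s2))) by auto.
        fold Z.
        rewrite (csum_delta' (fun w => csum (fun w' => Cmult (delta o w') (Cmult (Cmult (m v) cm) (RtoC (K2 w w')))) s2)) by auto.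
        rewrite (csum_delta' (fun w' => Cmult (Cmult (m v) cm) (RtoC (K2 o w')))) by auto.
        rewrite HK2. ring.
      + intros w _.
        rewrite (csum_ext _ (fun w' => Cplus (Cplus (Cplus
          (Cmult (Cmult (L v w) (Cconj (L v w'))) (RtoC (K2 w w')))
          (Copp (Cmult (delta o w') (Cmult (Cmult (L v w) cm) (RtoC (K2 w w'))))))
          (Copp (Cmult (delta o w) (Cmult (m v) (Cmult (Cconj (L v w')) (RtoC (K2 w w')))))))
          (Cmult (delta o w) (Cmult (delta o w') (Cmult (Cmult (m v) cm) (RtoC (K2 w w'))))))).
        * rewrite !csum_plus, !csum_opp, !csum_mult_l. reflexivity.
        * intros w' _. rewrite Cminus_conj, Cmult_conj. unfold cm. unfold delta.
          destruct (dec o w), (dec o w'); rewrite ?Cconj_R; ring. }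
  rewrite T1. ring.
Qed.

Lemma csnd_weak {A} (K : A -> A -> R) (lam : A -> C) l :
  cond_strict_neg_def K -> NoDup l -> (forall v, ~ In v l -> lam v = RtoC 0) ->
  csum lam l = RtoC 0 -> Im (Qf lam K l) = 0 /\ Re (Qf lam K l) <= 0.
Proof.
  intros HK Hn Hs Hz.
  destruct (classic (exists v, lam v <> RtoC 0)) as [Hex|Hno].
  - destruct (HK lam l Hn Hs Hex Hz) as [H1 H2]. split. exact H1. unfold Qf. lra.
  - assert (E : Qf lam K l = RtoC 0).
    { unfold Qf. rewrite (csum_ext _ (fun _ => RtoC 0)). apply csum_zero.
      intros x _. rewrite (csum_ext _ (fun _ => RtoC 0)). apply csum_zero.
      intros y _. assert (lam x = RtoC 0) as ->. { apply NNPP; intro; apply Hno; eauto. } ring. }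
    rewrite E. simpl. lra.
Qed.

Theorem comb_csnd {V1 V2} (K1 : V1 -> V1 -> R) (K2 : V2 -> V2 -> R) (o : V2) :
  (forall v, K1 v v = 0) -> K2 o o = 0 ->
  cond_strict_neg_def K1 -> cond_strict_neg_def K2 -> cond_strict_neg_def (combK K1 K2 o).
Proof.
  intros HK1 HK2 C1 C2 lam s Nd Hsupp [a0 Ha0] Hsum.
  enough (H : Im (Qf lam (combK K1 K2 o) s) = 0 /\ Re (Qf lam (combK K1 K2 o) s) < 0) by exact H.
  set (s1 := nodup dec (map fst s)). set (s2 := nodup dec (o :: map snd s)).
  set (P := list_prod s1 s2).
  assert (N1 : NoDup s1) by apply NoDup_nodup.
  assert (N2 : NoDup s2) by apply NoDup_nodup.
  assert (NP : NoDup P) by (apply NoDup_prod; auto).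
  assert (Ho : In o s2) by (unfold s2; rewrite nodup_In; left; auto).
  assert (HinP : forall a, In a s -> In a P).
  { intros [v w] H. unfold P. apply in_prod_iff. unfold s1, s2. rewrite !nodup_In. split.
    - apply (in_map fst) in H. exact H.
    - right. apply (in_map snd) in H. exact H. }
  assert (Hiff : forall a, lam a <> RtoC 0 -> (In a s <-> In a P)).
  { intros a Ha. split. apply HinP. intros _. apply NNPP. intros Hn. apply Ha. auto. }
  rewrite (Qf_support lam _ s P Nd NP Hiff).
  rewrite (csum_support lam s P Nd NP Hiff) in Hsum.
  unfold P in Hsum. rewrite csum_prod in Hsum.
  assert (EQ : Qf lam (combK K1 K2 o) P = S4 (fun v w v' w' => Cmult (Cmult (lam (v, w)) (Cconj (lam (v', w')))) (RtoC (combK K1 K2 o (v, w) (v', w')))) s1 s2).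
  { unfold Qf, S4, P. rewrite csum_prod. apply csum_ext; intros v _. apply csum_ext; intros w _.
    rewrite csum_prod. reflexivity. }
  rewrite EQ. clear EQ.
  rewrite (identity K1 K2 o (fun v w => lam (v, w)) s1 s2 HK1 HK2 N1 N2 Ho Hsum).
  set (m := fun v => csum (fun w => lam (v, w)) s2).
  set (mu := fun v w => Cminus (lam (v, w)) (Cmult (m v) (delta o w))).
  change (Im (Cplus (Qf m K1 s1) (csum (fun v => Qf (mu v) K2 s2) s1)) = 0 /\ Re (Cplus (Qf m K1 s1) (csum (fun v => Qf (mu v) K2 s2) s1)) < 0).
  assert (Hlam0 : forall v w, ~ In (v, w) s -> lam (v, w) = RtoC 0) by auto.
  assert (Hm0 : forall v, ~ In v s1 -> m v = RtoC 0).
  { intros v Hv. unfold m. rewrite (csum_ext _ (fun _ => RtoC 0)). apply csum_zero.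
    intros w _. apply Hlam0. intros H. apply Hv. unfold s1. rewrite nodup_In.
    apply (in_map fst) in H. exact H. }
  assert (Hdel : csum (delta o) s2 = RtoC 1).
  { rewrite <- (csum_delta' (fun _ => RtoC 1) s2 o) by auto. apply csum_ext; intros; ring. }
  assert (Hmu0 : forall v w, ~ In w s2 -> mu v w = RtoC 0).
  { intros v w Hw. unfold mu. rewrite Hlam0. unfold delta. destruct (dec o w). subst; tauto. ring.
    intros H. apply Hw. unfold s2. rewrite nodup_In. right. apply (in_map snd) in H. exact H. }
  assert (Hmus : forall v, csum (mu v) s2 = RtoC 0).
  { intros v. unfold mu. rewrite csum_minus, csum_mult_l, Hdel. fold (m v). ring. }
  assert (Wm : Im (Qf m K1 s1) = 0 /\ Re (Qf m K1 s1) <= 0).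
  { apply csnd_weak; auto. }
  assert (Wmu : forall v, Im (Qf (mu v) K2 s2) = 0 /\ Re (Qf (mu v) K2 s2) <= 0).
  { intros v. apply csnd_weak; auto. }
  split.
  - rewrite Im_plus, csum_Im0. destruct Wm; lra. intros v _. apply Wmu.
  - rewrite Re_plus. destruct (classic (exists v, m v <> RtoC 0)) as [Hex|Hno].
    + destruct (C1 m s1 N1 Hm0 Hex Hsum) as [_ Hlt].
      assert (Re (csum (fun v => Qf (mu v) K2 s2) s1) <= 0) by (apply csum_Rele; intros; apply Wmu).
      assert (Hlt2 : Re (Qf m K1 s1) < 0) by exact Hlt. lra.
    + destruct a0 as [v0 w0].
      assert (Hin : In (v0, w0) s) by (apply NNPP; intros H; apply Ha0; auto).
      assert (Hv0 : In v0 s1) by (unfold s1; rewrite nodup_In; apply (in_map fst) in Hin; exact Hin).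
      assert (Hmu : mu v0 w0 <> RtoC 0).
      { unfold mu. assert (m v0 = RtoC 0) as -> by (apply NNPP; intro; apply Hno; eauto).
        intros E. apply Ha0. rewrite <- E. ring. }
      destruct (C2 (mu v0) s2 N2 (Hmu0 v0) (ex_intro _ w0 Hmu) (Hmus v0)) as [_ Hlt].
      assert (Re (csum (fun v => Qf (mu v) K2 s2) s1) < 0).
      { apply (csum_Relt _ _ v0). intros; apply Wmu. auto. exact Hlt. }
      destruct Wm; lra.
Qed.

Lemma walk_app {V} (adj : V -> V -> Prop) n k x y z :
  walk adj n x y -> walk adj k y z -> walk adj (n + k) x z.
Proof.
  intros H1 H2. induction H2. rewrite Nat.add_0_r. exact H1.
  rewrite Nat.add_succ_r. econstructor; eauto.
Qed.

Lemma walk_map {V W} (adj : V -> V -> Prop) (adj' : W -> W -> Prop) (f : V -> W) n x y :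
  (forall a b, adj a b -> adj' (f a) (f b)) -> walk adj n x y -> walk adj' n (f x) (f y).
Proof. intros Hf H. induction H. constructor. econstructor; eauto. Qed.

Lemma min_exists (P : nat -> Prop) : (exists n, P n) -> exists n, P n /\ forall m, P m -> (n <= m)%nat.
Proof.
  intros [n Hn]. apply NNPP. intros Hno.
  assert (forall k, forall j, (j <= k)%nat -> ~ P j).
  { induction k; intros j Hj HP.
    - apply Hno. exists j. split; auto. intros; lia.
    - apply Hno. exists j. split; auto. intros m Hm.
      destruct (Nat.le_gt_cases j m); auto. exfalso. apply (IHk m). lia. auto. }
  apply (H n n); auto.
Qed.

Lemma gdist_spec {V} (adj : V -> V -> Prop) x y : (exists n, walk adj n x y) ->
  walk adj (gdist adj x y) x y /\ forall m, walk adj m x y -> (gdist adj x y <= m)%nat.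
Proof.
  intros H. unfold gdist. apply epsilon_spec.
  apply (min_exists (fun n => walk adj n x y)). exact H.
Qed.

Lemma gdist_eq {V} (adj : V -> V -> Prop) n x y : walk adj n x y ->
  (forall m, walk adj m x y -> (n <= m)%nat) -> gdist adj x y = n.
Proof.
  intros Hw Hm. destruct (gdist_spec adj x y (ex_intro _ n Hw)) as [H1 H2].
  specialize (H2 n Hw). specialize (Hm _ H1). lia.
Qed.

Lemma gdist_refl {V} (adj : V -> V -> Prop) x : gdist adj x x = 0%nat.
Proof. apply gdist_eq. constructor. intros; lia. Qed.

Lemma gdist_step {V} (adj : V -> V -> Prop) x y z : connected adj -> adj y z ->
  (gdist adj x z <= gdist adj x y + 1)%nat.
Proof.
  intros Hc Ha. destruct (gdist_spec adj x y (Hc x y)) as [H1 _].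
  destruct (gdist_spec adj x z (Hc x z)) as [_ H2].
  rewrite Nat.add_1_r. apply H2. econstructor; eauto.
Qed.

Definition phi {V1 V2} (adj1 : V1 -> V1 -> Prop) (adj2 : V2 -> V2 -> Prop) (o : V2) (a b : V1 * V2) : nat :=
  if dec (fst a) (fst b) then gdist adj2 (snd a) (snd b)
  else (gdist adj2 (snd a) o + gdist adj1 (fst a) (fst b) + gdist adj2 o (snd b))%nat.

Lemma comb_lower {V1 V2} (adj1 : V1 -> V1 -> Prop) (adj2 : V2 -> V2 -> Prop) o a b n :
  connected adj1 -> connected adj2 ->
  walk (comb_adj adj1 adj2 o) n a b -> (phi adj1 adj2 o a b <= n)%nat.
Proof.
  intros C1 C2 H. induction H as [a|n a b c Hw IH Hadj].
  - unfold phi. destruct (dec (fst a) (fst a)); [|congruence]. rewrite gdist_refl. lia.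
  - destruct a as [v w], b as [u x], c as [u' x']. unfold phi in *; simpl in *.
    destruct Hadj as [[E A2]|[E1 [E2 A1]]]; simpl in *.
    + subst u'. destruct (dec v u).
      * pose proof (gdist_step adj2 w x x' C2 A2). lia.
      * pose proof (gdist_step adj2 o x x' C2 A2). lia.
    + subst x x'. rewrite gdist_refl in *.
      destruct (dec v u), (dec v u'); subst.
      * lia.
      * pose proof (gdist_step adj1 u u u' C1 A1). rewrite gdist_refl in *. lia.
      * lia.
      * pose proof (gdist_step adj1 v u u' C1 A1). lia.
Qed.

Lemma comb_upper {V1 V2} (adj1 : V1 -> V1 -> Prop) (adj2 : V2 -> V2 -> Prop) o a b :
  connected adj1 -> connected adj2 ->
  walk (comb_adj adj1 adj2 o) (phi adj1 adj2 o a b) a b.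
Proof.
  intros C1 C2. destruct a as [v w], b as [v' w']. unfold phi; simpl.
  assert (F : forall u y z n, walk adj2 n y z -> walk (comb_adj adj1 adj2 o) n (u, y) (u, z)).
  { intros u y z n Hw. apply (walk_map adj2 _ (fun t => (u, t))); auto.
    intros a b Hab. left. simpl. auto. }
  destruct (dec v v').
  - subst. apply F. apply gdist_spec, C2.
  - apply walk_app with (v', o). apply walk_app with (v, o).
    + apply F. apply gdist_spec, C2.
    + apply (walk_map adj1 _ (fun t => (t, o))). intros a b Hab. right; simpl; auto.
      apply gdist_spec, C1.
    + apply F. apply gdist_spec, C2.
Qed.

Lemma comb_metric {V1 V2} (adj1 : V1 -> V1 -> Prop) (adj2 : V2 -> V2 -> Prop) o :
  connected adj1 -> connected adj2 ->
  path_metric (comb_adj adj1 adj2 o) = combK (path_metric adj1) (path_metric adj2) o.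
Proof.
  intros C1 C2. extensionality a. extensionality b.
  unfold path_metric. rewrite (gdist_eq _ (phi adj1 adj2 o a b)).
  - unfold phi, combK. destruct (dec (fst a) (fst b)). reflexivity. rewrite !plus_INR. reflexivity.
  - apply comb_upper; auto.
  - intros m Hm. apply comb_lower in Hm; auto.
Qed.

Theorem mainTheorem8 (V1 V2 : Type) (adj1 : V1 -> V1 -> Prop)
  (adj2 : V2 -> V2 -> Prop) (o : V2) :
  simple_graph adj1 -> connected adj1 ->
  simple_graph adj2 -> connected adj2 ->
  cond_strict_neg_def (path_metric adj1) ->
  cond_strict_neg_def (path_metric adj2) ->
  cond_strict_neg_def (path_metric (comb_adj adj1 adj2 o)).
Proof.
  intros _ C1 _ C2 H1 H2. rewrite comb_metric by auto.
  apply comb_csnd; auto.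
  - intros v. unfold path_metric. rewrite gdist_refl. reflexivity.
  - unfold path_metric. rewrite gdist_refl. reflexivity.
Qed.
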